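(* Let $f:\mathbb{R}^n\to\mathbb{R}$ be a continuously differentiable convex function. Let $D_1,\dots,D_p$ and $H_1,\dots,H_p$ be diagonal matrices, each $H_i$ with nonnegative diagonal entries, such that for each $i$, $f(y)\le f(x)+\nabla f(x)^T(y-x)+\tfrac12\|y-x\|_{H_i}^2$ for all $x,y\in\mathbb{R}^n$, and $D_i\succ H_i$. Let $(x_{k,m})_{k\ge1,\,0\le m\le p}$ be generated by the CIWHT method with $\mathcal{D}=(D_1,\dots,D_p)$. Then every limit point $\bar x$ of the sequence of iterates $(x_{k,m})_{k\ge 1,\,1\le m\le p}$ (ordered lexicographically in $(k,m)$) is $D_i$-stationary for every $i=1,\dots,p$.
   Context: $\|z\|_A^2=z^TAz$. $C_s=\{x\in\mathbb{R}^n:\|x\|_0\le s\}$ for a positive integer $s$, where $\|x\|_0$ is the number of nonzero entries. $\mathcal{P}_{C_s}(z)=\operatorname{argmin}_{y\in C_s}\|y-z\|_2^2$ (set-valued). CIWHT (Cyclic Iterative Weighted Hard Thresholding): given an initial point $x_{1,0}\in C_s$; for $k=1,2,\dots$, for $m=1,\dots,p$, pick $y_{k,m}\in\mathcal{P}_{C_s}\big(D_m^{1/2}x_{k,m-1}-D_m^{-1/2}\nabla f(x_{k,m-1})\big)$ and set $x_{k,m}=D_m^{-1/2}y_{k,m}$; then set $x_{k+1,0}=x_{k,p}$. For a diagonal $D\succ0$, a point $x\in C_s$ is $D$-stationary if $x\in D^{-1/2}\mathcal{P}_{C_s}\big(D^{1/2}x-D^{-1/2}\nabla f(x)\big)$.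 *)

(* Defs.v *)
From HB Require Import structures.
From mathcomp Require Import all_boot all_order all_algebra.
From mathcomp Require Import all_classical all_reals all_analysis.
Set Implicit Arguments. Unset Strict Implicit. Unset Printing Implicit Defensive.
Import Order.TTheory GRing.Theory Num.Theory.
Import numFieldNormedType.Exports.
Local Open Scope ring_scope.

Section Defs.
Variables (R : realType) (n : nat).

Definition qform (A : 'M[R]_n) (z : 'rV[R]_n) : R := (z *m A *m z^T) 0 0.

Definition dotv (u v : 'rV[R]_n) : R := (u *m v^T) 0 0.

Definition posdef (A : 'M[R]_n) : Prop := forall z : 'rV[R]_n, z != 0 -> 0 < qform A z.

Definition l0 (x : 'rV[R]_n) : nat := #|[set i : 'I_n | x 0 i != 0]|.

Definition Cs (s : nat) (x : 'rV[R]_n) : Prop := (l0 x <= s)%N.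

Definition projCs (s : nat) (z y : 'rV[R]_n) : Prop :=
  Cs s y /\ forall y' : 'rV[R]_n, Cs s y' -> dotv (y - z) (y - z) <= dotv (y' - z) (y' - z).

(* For a diagonal matrix D = diag_mx d (d with positive entries):
   D^{1/2} = diag_mx (dsqrt d), D^{-1/2} = diag_mx (dinvsqrt d). *)
Definition dsqrt (d : 'rV[R]_n) : 'rV[R]_n := map_mx Num.sqrt d.
Definition dinvsqrt (d : 'rV[R]_n) : 'rV[R]_n := map_mx (fun a => (Num.sqrt a)^-1) d.

(* x is (diag_mx d)-stationary for f with gradient g (vectors as rows, so
   D^{1/2} x is written x *m D^{1/2}) *)
Definition Dstationary (s : nat) (g : 'rV[R]_n -> 'rV[R]_n) (d : 'rV[R]_n)
    (x : 'rV[R]_n) : Prop :=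
  Cs s x /\
  exists y, projCs s (x *m diag_mx (dsqrt d) - g x *m diag_mx (dinvsqrt d)) y
            /\ x = y *m diag_mx (dinvsqrt d).

Definition seq_limit_point (u : nat -> 'rV[R]_n) (xbar : 'rV[R]_n) : Prop :=
  forall e : R, 0 < e -> forall N : nat, exists2 j : nat, (N <= j)%N & `|u j - xbar| < e.

End Defs.

(* Main.v *)
Require Import Defs.
From HB Require Import structures.
From mathcomp Require Import all_boot all_order all_algebra.
From mathcomp Require Import all_classical all_reals all_analysis.
From mathcomp Require Import ring lra zify.
Import Order.TTheory GRing.Theory Num.Theory.
Import numFieldNormedType.Exports.
Local Open Scope ring_scope.

Section H.
Variables (R : realType) (n : nat).
Implicit Types (u v a b z : 'rV[R]_n).

Lemma mdiagE (x a : 'rV[R]_n) j : (x *m diag_mx a) 0 j = x 0 j * a 0 j.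
Proof. by rewrite mul_mx_diag mxE. Qed.

Lemma dotvE u v : dotv u v = \sum_j u 0 j * v 0 j.
Proof. by rewrite /dotv mxE; apply: eq_bigr => j _; rewrite mxE. Qed.

Lemma qformE (a z : 'rV[R]_n) : qform (diag_mx a) z = \sum_j a 0 j * z 0 j ^+ 2.
Proof.
rewrite /qform mxE; apply: eq_bigr => j _; rewrite mdiagE mxE; by rewrite mulrC mulrA expr2 mulrC mulrA.
Qed.

Lemma posdef_diag (dd hh : 'rV[R]_n) : posdef (diag_mx dd - diag_mx hh) ->
  forall j, 0 < dd 0 j - hh 0 j.
Proof.
move=> P j.
have E : diag_mx dd - diag_mx hh = diag_mx (dd - hh).
  by apply/matrixP => k l; rewrite !mxE; case: (k == l) => /=; rewrite ?mulr1n ?mulr0n ?subr0.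
have nz : (delta_mx 0 j : 'rV[R]_n) != 0.
  apply/eqP => /matrixP /(_ 0 j); rewrite !mxE !eqxx /= => /eqP; by rewrite oner_eq0.
have := P _ nz; rewrite E qformE (bigD1 j) //= big1 ?addr0.
  by rewrite !mxE !eqxx /= expr1n mulr1.
by move=> k kj; rewrite !mxE eqxx /= (negbTE kj) /= expr0n /= mulr0.
Qed.

Lemma sqrt_pos (x : R) : 0 < x -> 0 < Num.sqrt x.
Proof. by move=> h; rewrite sqrtr_gt0. Qed.

Lemma fin_lb (I : finType) (F : I -> R) : (forall i, 0 < F i) ->
  exists2 c, 0 < c & forall i, c <= F i.
Proof.
move=> Fp; exists (1 + \sum_i (F i)^-1)^-1.
  rewrite invr_gt0 ltr_wpDr // sumr_ge0 // => i _; rewrite invr_ge0 ltW //.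
move=> i; rewrite -[F i]invrK lef_pV2 ?posrE ?invr_gt0 //; last first.
  by rewrite ltr_wpDr // sumr_ge0 // => k _; rewrite invr_ge0 ltW.
rewrite (bigD1 i) //= addrCA lerDl addr_ge0 // sumr_ge0 // => k _; rewrite invr_ge0 ltW //.
Qed.

Lemma l0_scale (y a : 'rV[R]_n) : (forall j, a 0 j != 0) -> l0 (y *m diag_mx a) = l0 y.
Proof.
move=> ha; rewrite /l0; apply: eq_card => j; rewrite !inE mdiagE mulf_eq0 negb_or ha andbT //.
Qed.

Lemma entry_le_norm (M : 'rV[R]_n) j : `|M 0 j| <= `|M|.
Proof.
have -> : `|M| = mx_norm M by [].
rewrite mx_normrE.
exact: (le_bigmax _ (fun ij : 'I_1 * 'I_n => `|M ij.1 ij.2|) (0, j)).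
Qed.

Lemma norm_sq_le (w : 'rV[R]_n) (q : 'rV[R]_n) c : 0 <= c -> (forall j, c <= q 0 j) ->
  c * `|w| ^+ 2 <= \sum_j q 0 j * w 0 j ^+ 2.
Proof.
move=> c0 hq.
have sq0 : forall j, 0 <= q 0 j * w 0 j ^+ 2 by move=> j; rewrite mulr_ge0 ?sqr_ge0 // (le_trans c0).
have [w0|] := eqVneq `|w| 0.
  by rewrite w0 expr0n /= mulr0 sumr_ge0.
have -> : `|w| = mx_norm w by [].
move=> /mx_norm_neq0 [[i j] /= ->].
have -> : i = 0 by apply/val_inj => /=; case: i => [[]].
rewrite (bigD1 j) //= real_normK ?num_real //.
apply: le_trans (_ : q 0 j * w 0 j ^+ 2 <= _); first by rewrite ler_wpM2r ?sqr_ge0.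
by rewrite lerDl sumr_ge0.
Qed.
End H.

Section H2.
Variables (R : realType) (n : nat).

Lemma dsqrtE (dd : 'rV[R]_n) j : dsqrt dd 0 j = Num.sqrt (dd 0 j).
Proof. by rewrite mxE. Qed.
Lemma dinvsqrtE (dd : 'rV[R]_n) j : dinvsqrt dd 0 j = (Num.sqrt (dd 0 j))^-1.
Proof. by rewrite mxE. Qed.

Lemma entryB (u v : 'rV[R]_n) j : (u - v) 0 j = u 0 j - v 0 j.
Proof. by rewrite !mxE. Qed.

Lemma step_descent (f : 'rV[R]_n -> R) (g : 'rV[R]_n -> 'rV[R]_n) (dd hh a b y : 'rV[R]_n) s :
  (forall j, 0 < dd 0 j - hh 0 j) -> (forall j, 0 <= hh 0 j) ->
  (forall x y, f y <= f x + dotv (g x) (y - x) + 2^-1 * qform (diag_mx hh) (y - x)) ->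
  Cs s a ->
  projCs s (a *m diag_mx (dsqrt dd) - g a *m diag_mx (dinvsqrt dd)) y ->
  b = y *m diag_mx (dinvsqrt dd) ->
  Cs s b /\ f b <= f a - 2^-1 * \sum_j (dd 0 j - hh 0 j) * (b - a) 0 j ^+ 2.
Proof.
move=> hdh hh0 hL Ca [Cy Py] eb.
have dpos j : 0 < dd 0 j by have := hdh j; have := hh0 j; lra.
have spos j : 0 < Num.sqrt (dd 0 j) by rewrite sqrtr_gt0.
have snz j : Num.sqrt (dd 0 j) != 0 by rewrite gt_eqF.
have ssq j : Num.sqrt (dd 0 j) ^+ 2 = dd 0 j by rewrite sqr_sqrtr // ltW.
have ye j : y 0 j = b 0 j * Num.sqrt (dd 0 j).
  by rewrite eb mdiagE dinvsqrtE mulrVK ?unitfE.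
split.
  rewrite /Cs eb l0_scale //= => j; rewrite dinvsqrtE invr_eq0 snz //.
have Ca' : Cs s (a *m diag_mx (dsqrt dd)).
  rewrite /Cs l0_scale // => j; rewrite dsqrtE snz //.
have := Py _ Ca'; rewrite !dotvE.
set z := (a *m diag_mx (dsqrt dd) - g a *m diag_mx (dinvsqrt dd)).
move=> ineq.
have key : \sum_j (dd 0 j * (b - a) 0 j ^+ 2 + 2 * ((b - a) 0 j * g a 0 j)) <= 0.
  apply: le_trans (_ : _ <= \sum_j (y - z) 0 j * (y - z) 0 j - \sum_j ((a *m diag_mx (dsqrt dd)) - z) 0 j * ((a *m diag_mx (dsqrt dd)) - z) 0 j) _; last by rewrite subr_le0.
  rewrite -sumrB le_eqVlt; apply/orP; left; apply/eqP.
  apply: eq_bigr => j _.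
  rewrite /z !entryB !mdiagE ye !dsqrtE !dinvsqrtE.
  set S := Num.sqrt (dd 0 j).
  rewrite -(ssq j) -/S.
  field; exact: snz.
have L := hL a b.
rewrite dotvE qformE in L.
set w := b - a in L key *.
have E1 : \sum_j (dd 0 j * w 0 j ^+ 2 + 2 * (w 0 j * g a 0 j)) =
   \sum_j dd 0 j * w 0 j ^+ 2 + 2 * \sum_j g a 0 j * w 0 j.
  rewrite big_split /= mulr_sumr; congr (_ + _); by apply: eq_bigr => j _; rewrite [w 0 j * _]mulrC.
have E2 : \sum_j (dd 0 j - hh 0 j) * w 0 j ^+ 2 =
   \sum_j dd 0 j * w 0 j ^+ 2 - \sum_j hh 0 j * w 0 j ^+ 2.
  by rewrite -sumrB; apply: eq_bigr => j _; rewrite mulrBl.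
rewrite E2; rewrite E1 in key.
move: key L.
set A := \sum_j g a 0 j * w 0 j.
set B := \sum_j hh 0 j * w 0 j ^+ 2.
set C := \sum_j dd 0 j * w 0 j ^+ 2.
move=> k1 k2.
lra.
Qed.
End H2.

Section H3.
Local Open Scope nat_scope.
Lemma modS_full j p : (0 < p)%N -> p %| j.+1 -> (j %% p).+1 = p.
Proof.
move=> p0 hd.
have h1 : (j %% p).+1 <= p by rewrite ltn_pmod.
have h2 : ((j %% p).+1) %% p = 0.
  by rewrite -addn1 modnDml addn1; apply/eqP; rewrite -/(dvdn p j.+1).
case: (ltngtP (j %% p).+1 p) h1 => // hlt _.
by rewrite modn_small in h2.
Qed.

Lemma idx_prev (T : Type) (x : nat -> nat -> T) p :
  (0 < p)%N -> (forall k, (1 <= k)%N -> x k.+1 0 = x k p) ->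
  forall j, x (j %/ p).+1 (j %% p) =
    (if j is j'.+1 then x (j' %/ p).+1 (j' %% p).+1 else x 1 0).
Proof.
move=> p0 hn [|j]; first by rewrite div0n mod0n.
rewrite modnS divnS //.
case hd: (p %| j.+1) => /=.
  by rewrite add1n hn // modS_full.
by rewrite add0n.
Qed.

Lemma residue J p r : (r < p)%N -> exists t, (t < p)%N /\ (J + t) %% p = r.
Proof.
move=> rp.
have p0 : (0 < p)%N by apply: leq_ltn_trans rp.
exists ((r + (p - J %% p)) %% p); split; first by rewrite ltn_pmod.
rewrite modnDmr {1}(divn_eq J p).
have hb : J %% p <= p by apply: ltnW; rewrite ltn_pmod.
have -> : J %/ p * p + J %% p + (r + (p - J %% p)) = J %/ p * p + (r + p) by lia.
by rewrite modnMDl modnDr modn_small.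
Qed.

End H3.

Section H4.
Local Open Scope classical_set_scope.
Variables (R : realType) (n : nat).

Lemma cont_eps (f : 'rV[R]_n -> R) (X : 'rV[R]_n) : {for X, continuous f} ->
  forall e, 0 < e -> exists2 del, 0 < del & forall t, `|t - X| < del -> `|f t - f X| < e.
Proof.
move=> fc e e0.
have := fc; move/cvgrPdist_lt => /(_ e e0) /nbhs_ballP [del /= del0 H].
exists del => // t ht; rewrite distrC; apply: H.
by rewrite -ball_normE /ball_ /= distrC.
Qed.

Lemma cvg_entry (u : nat -> 'rV[R]_n) (X : 'rV[R]_n) j :
  u @ \oo --> X -> (fun k => u k 0 j) @ \oo --> X 0 j.
Proof.
move/cvgrPdist_lt => H; apply/cvgrPdist_lt => e e0.
move: (H e e0); apply: filterS => k.
apply: le_lt_trans.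
have -> : X 0 j - u k 0 j = (X - u k) 0 j by rewrite !mxE.
exact: entry_le_norm.
Qed.
End H4.

Section H5.
Local Open Scope classical_set_scope.
Variables (R : realType) (n : nat).

Lemma limit_ineq (v : nat -> 'rV[R]_n) (X : 'rV[R]_n) (g : 'rV[R]_n -> 'rV[R]_n)
  (S T : 'I_n -> R) (y' : 'rV[R]_n) (P : nat -> Prop) :
  continuous g ->
  (forall del, 0 < del -> exists j, P j /\ `|v j - X| < del /\ `|v j.+1 - X| < del) ->
  (forall j, P j ->
     \sum_k (v j.+1 0 k * S k - (v j 0 k * S k - g (v j) 0 k * T k)) *
            (v j.+1 0 k * S k - (v j 0 k * S k - g (v j) 0 k * T k))
     <= \sum_k (y' 0 k - (v j 0 k * S k - g (v j) 0 k * T k)) *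
               (y' 0 k - (v j 0 k * S k - g (v j) 0 k * T k))) ->
  \sum_k (X 0 k * S k - (X 0 k * S k - g X 0 k * T k)) *
         (X 0 k * S k - (X 0 k * S k - g X 0 k * T k))
  <= \sum_k (y' 0 k - (X 0 k * S k - g X 0 k * T k)) *
            (y' 0 k - (X 0 k * S k - g X 0 k * T k)).
Proof.
move=> gc happ hineq.
have FFi : Filter (\oo : set_system nat) by exact: eventually_filter.
have /choice [J HJ] : forall k : nat, exists j, P j /\ `|v j - X| < k.+1%:R^-1 /\ `|v j.+1 - X| < k.+1%:R^-1.
  by move=> k; apply: happ; rewrite invr_gt0 ltr0n.
pose a := fun k => v (J k).
pose b := fun k => v (J k).+1.
have acv : a @ \oo --> X.
  apply/cvgrPdist_lt => e e0; near=> k; rewrite distrC.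
  apply: lt_trans (HJ k).2.1 _; near: k; exact: (near_infty_natSinv_lt (PosNum e0)).
have bcv : b @ \oo --> X.
  apply/cvgrPdist_lt => e e0; near=> k; rewrite distrC.
  apply: lt_trans (HJ k).2.2 _; near: k; exact: (near_infty_natSinv_lt (PosNum e0)).
have gcv : (g \o a) @ \oo --> g X by apply: continuous_cvg => //; exact: gc.
have L1 : (fun k => \sum_i (b k 0 i * S i - (a k 0 i * S i - g (a k) 0 i * T i)) *
            (b k 0 i * S i - (a k 0 i * S i - g (a k) 0 i * T i))) @ \oo -->
     \sum_i (X 0 i * S i - (X 0 i * S i - g X 0 i * T i)) *
         (X 0 i * S i - (X 0 i * S i - g X 0 i * T i)).
  apply: cvg_big => //; first exact: add_continuous.
  move=> k _.
  pose proof (@cvgMr_tmp _ _ _ _ _ _ (S k) (@cvg_entry _ _ _ _ k bcv)) as h1.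
  pose proof (@cvgMr_tmp _ _ _ _ _ _ (S k) (@cvg_entry _ _ _ _ k acv)) as h2.
  pose proof (@cvgMr_tmp _ _ _ _ _ _ (T k) (@cvg_entry _ _ _ _ k gcv)) as h3.
  pose proof (cvgB h1 (cvgB h2 h3)) as h4.
  pose proof (cvgM h4 h4) as h5. exact: h5.
have L2 : (fun k => \sum_i (y' 0 i - (a k 0 i * S i - g (a k) 0 i * T i)) *
            (y' 0 i - (a k 0 i * S i - g (a k) 0 i * T i))) @ \oo -->
     \sum_i (y' 0 i - (X 0 i * S i - g X 0 i * T i)) *
         (y' 0 i - (X 0 i * S i - g X 0 i * T i)).
  apply: cvg_big => //; first exact: add_continuous.
  move=> k _.
  pose proof (@cvgMr_tmp _ _ _ _ _ _ (S k) (@cvg_entry _ _ _ _ k acv)) as h2.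
  pose proof (@cvgMr_tmp _ _ _ _ _ _ (T k) (@cvg_entry _ _ _ _ k gcv)) as h3.
  pose proof (cvgB (cvg_cst (y' 0 k)) (cvgB h2 h3)) as h4.
  pose proof (cvgM h4 h4) as h5. exact: h5.
apply: (ler_cvg_to L1 L2).
by near=> k; apply: hineq; exact: (HJ k).1.
Unshelve. all: by end_near.
Qed.
End H5.

Theorem theorem4p5 (R : realType) (n p s : nat) (hs : (0 < s)%N)
  (f : 'rV[R]_n -> R) (g : 'rV[R]_n -> 'rV[R]_n)
  (hdiff : forall x, differentiable f x)
  (hgrad : forall x hv, 'd f x hv = dotv (g x) hv)
  (hgc : continuous g)
  (hconv : forall (x y : 'rV[R]_n) (t : R), 0 <= t <= 1 ->
     f (t *: x + (1 - t) *: y) <= t * f x + (1 - t) * f y)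
  (d h : nat -> 'rV[R]_n)
  (hh : forall i, (1 <= i <= p)%N -> forall j, 0 <= h i 0 j)
  (hL : forall i, (1 <= i <= p)%N -> forall x y : 'rV[R]_n,
     f y <= f x + dotv (g x) (y - x) + 2^-1 * qform (diag_mx (h i)) (y - x))
  (hDH : forall i, (1 <= i <= p)%N -> posdef (diag_mx (d i) - diag_mx (h i)))
  (x : nat -> nat -> 'rV[R]_n)
  (hx0 : Cs s (x 1%N 0%N))
  (hstep : forall k m, (1 <= k)%N -> (1 <= m <= p)%N ->
     exists y, projCs s (x k m.-1 *m diag_mx (dsqrt (d m))
                         - g (x k m.-1) *m diag_mx (dinvsqrt (d m))) y
               /\ x k m = y *m diag_mx (dinvsqrt (d m)))
  (hnext : forall k, (1 <= k)%N -> x k.+1 0%N = x k p)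
  (xbar : 'rV[R]_n)
  (hlim : seq_limit_point (fun j => x (j %/ p).+1 (j %% p).+1) xbar) :
  forall i, (1 <= i <= p)%N -> Dstationary s g (d i) xbar.
Proof.
move=> i /andP [i1 ip].
have p0 : (0 < p)%N by apply: leq_trans ip.
have hip : (1 <= i <= p)%N by rewrite i1 ip.
have hdh m : (1 <= m <= p)%N -> forall j, 0 < d m 0 j - h m 0 j.
  by move=> hm; apply: posdef_diag; exact: hDH.
have [c c0 hc] : exists2 c : R, 0 < c &
    forall m, (1 <= m <= p)%N -> forall j, c <= d m 0 j - h m 0 j.
  have [c c0 hc] := @fin_lb R _
    (fun mj : 'I_p * 'I_n => d (mj.1 : nat).+1 0 mj.2 - h (mj.1 : nat).+1 0 mj.2)
    (fun mj => hdh _ (ltn_ord mj.1 : (1 <= (mj.1 : nat).+1 <= p)%N) mj.2).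
  exists c => // m /andP [m1 mp] j.
  have mp' : (m.-1 < p)%N by rewrite prednK.
  by have := hc (Ordinal mp', j); rewrite /= prednK.
pose v := fun j : nat => if j is j'.+1 then x (j' %/ p).+1 (j' %% p).+1 else x 1%N 0%N.
have vprev : forall j, x (j %/ p)%N.+1 (j %% p)%N = v j := @idx_prev _ x p p0 hnext.
have mrange j : (1 <= (j %% p)%N.+1 <= p)%N by rewrite /= ltn_pmod.
have vstep : forall j, exists y,
    projCs s (v j *m diag_mx (dsqrt (d (j %% p)%N.+1))
              - g (v j) *m diag_mx (dinvsqrt (d (j %% p)%N.+1))) y
    /\ v j.+1 = y *m diag_mx (dinvsqrt (d (j %% p)%N.+1)).
  move=> j; have [y [Py ey]] := hstep (j %/ p)%N.+1 (j %% p)%N.+1 isT (mrange j).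
  by exists y; rewrite -vprev; split.
have Cv : forall j, Cs s (v j).
  elim=> [|j IH]; first exact: hx0.
  have [y [Py ey]] := vstep j.
  exact: (@step_descent R n f g _ _ _ _ _ s (hdh _ (mrange j)) (hh _ (mrange j))
            (hL _ (mrange j)) IH Py ey).1.
have desc : forall j, f (v j.+1) <= f (v j) - 2^-1 * (c * `|v j.+1 - v j| ^+ 2).
  move=> j; have [y [Py ey]] := vstep j.
  have [_ H] := (@step_descent R n f g _ _ _ _ _ s (hdh _ (mrange j)) (hh _ (mrange j))
            (hL _ (mrange j)) (Cv j) Py ey).
  apply: le_trans H _; rewrite lerD2l lerN2 ler_wpM2l ?invr_ge0 ?ler0n //.
  have := @norm_sq_le R n (v j.+1 - v j) (d (j %% p)%N.+1 - h (j %% p)%N.+1) c (ltW c0)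
    (fun k => ltac:(rewrite entryB; exact: hc (mrange j) k)).
  by under eq_bigr do rewrite entryB.
have mono : forall j t, f (v (j + t)%N) <= f (v j).
  move=> j; elim=> [|t IH]; first by rewrite addn0.
  rewrite addnS; apply: le_trans (desc _) _; apply: le_trans IH.
  by rewrite lerBlDr lerDl mulr_ge0 ?invr_ge0 ?ler0n // mulr_ge0 ?sqr_ge0 // ltW.
have fe := @cont_eps R n f xbar (differentiable_continuous (hdiff xbar)).
have lower : forall j, f xbar <= f (v j).
  move=> j; rewrite leNgt; apply/negP => hlt.
  have e0 : 0 < f xbar - f (v j) by rewrite subr_gt0.
  have [del del0 Hd] := fe _ e0.
  have [j0 jj0 Hj0] := hlim del del0 j.
  have Hj0' : `|v j0.+1 - xbar| < del := Hj0.
  have m2 := Hd _ Hj0'.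
  have m1 := mono j (j0.+1 - j)%N; rewrite subnKC in m1; last exact: leqW.
  move/ltr_normlP: m2 => [a1 a2]; lra.
have smallf : forall e, 0 < e -> exists N, f (v N) < f xbar + e.
  move=> e e0; have [del del0 Hd] := fe e e0.
  have [j0 _ Hj0] := hlim del del0 0%N.
  have Hj0' : `|v j0.+1 - xbar| < del := Hj0.
  exists j0.+1; move/ltr_normlP: (Hd _ Hj0') => [a1 a2]; lra.
have steps : forall eta, 0 < eta -> exists N, forall j, (N <= j)%N -> `|v j.+1 - v j| < eta.
  move=> eta eta0.
  have e0 : 0 < c * eta ^+ 2 / 4 by rewrite divr_gt0 ?mulr_gt0 ?exprn_gt0 ?ltr0n.
  have [N HN] := smallf _ e0.
  exists N => j Nj.
  have m := mono N (j - N)%N; rewrite subnKC // in m.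
  have lo := lower j.+1; have ds := desc j.
  have D0 : 0 <= `|v j.+1 - v j| by [].
  set D := `|v j.+1 - v j| in D0 ds *.
  have sq : D ^+ 2 < eta ^+ 2.
    rewrite -(ltr_pM2l c0); lra.
  nra.
have walk : forall N eta, (forall j, (N <= j)%N -> `|v j.+1 - v j| < eta) ->
    forall J t, (N <= J)%N -> `|v (J + t)%N - v J| <= t%:R * eta.
  move=> N eta HN J; elim=> [|t IH] NJ; first by rewrite addn0 subrr normr0 mul0r.
  rewrite addnS.
  have -> : v (J + t).+1 - v J = (v (J + t).+1 - v (J + t)%N) + (v (J + t)%N - v J).
    by rewrite addrA subrK.
  apply: le_trans (ler_normD _ _) _.
  rewrite mulrSr mulrDl mul1r addrC lerD //; first exact: IH.
  by apply: ltW; apply: HN; apply: leq_trans NJ (leq_addr _ _).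
have approx : forall del, 0 < del ->
    exists j, (j %% p = i.-1)%N /\ `|v j - xbar| < del /\ `|v j.+1 - xbar| < del.
  move=> del del0.
  have q0 : 0 < 2 * p%:R + 2 :> R by have : 0 <= p%:R :> R := ler0n _ _; lra.
  have eta0 : 0 < del / (2 * p%:R + 2) by rewrite divr_gt0.
  have [N HN] := steps _ eta0.
  have d2 : 0 < del / 2 by rewrite divr_gt0.
  have [j0 Nj0 Hj0] := hlim _ d2 N.
  have Hj0' : `|v j0.+1 - xbar| < del / 2 := Hj0.
  have ir : (i.-1 < p)%N by rewrite prednK.
  have [t [tp ht]] := residue j0.+1 p i.-1 ir.
  exists (j0.+1 + t)%N; split => //.
  have W1 := walk N _ HN j0.+1 t (leqW Nj0).
  have W2 := walk N _ HN j0.+1 t.+1 (leqW Nj0); rewrite addnS in W2.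
  have tb : t.+1%:R * (del / (2 * p%:R + 2)) <= p%:R * (del / (2 * p%:R + 2)).
    by apply: ler_wpM2r; [exact: ltW | rewrite ler_nat].
  have tb' : t%:R * (del / (2 * p%:R + 2)) <= t.+1%:R * (del / (2 * p%:R + 2)).
    by apply: ler_wpM2r; [exact: ltW | rewrite ler_nat].
  have pb : p%:R * (del / (2 * p%:R + 2)) < del / 2.
    rewrite mulrA ltr_pdivrMr //.
    have pp : 0 <= p%:R :> R by rewrite ler0n.
    nra.
  have T1 := ler_normD (v (j0.+1 + t)%N - v j0.+1) (v j0.+1 - xbar).
  have T2 := ler_normD (v (j0.+1 + t).+1 - v j0.+1) (v j0.+1 - xbar).
  rewrite addrA subrK in T1; rewrite addrA subrK in T2.
  split; lra.
have Cx : Cs s xbar.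
  have [del del0 hdel] := @fin_lb R _
    (fun j : 'I_n => if xbar 0 j != 0 then `|xbar 0 j| else 1)
    (fun j => ltac:(by case: (xbar 0 j =P 0) => [->|/eqP nz]; rewrite ?eqxx ?nz ?normr_gt0)).
  have [j0 _ Hj0] := hlim del del0 0%N.
  have Hj0' : `|v j0.+1 - xbar| < del := Hj0.
  rewrite /Cs; apply: leq_trans _ (Cv j0.+1).
  rewrite /l0; apply: subset_leq_card.
  apply/fintype.subsetP => k; rewrite !inE => nz.
  apply/eqP => z.
  have := hdel k; rewrite nz.
  have := @entry_le_norm R n (v j0.+1 - xbar) k; rewrite entryB z sub0r normrN.
  move=> a b; have := lt_le_trans (le_lt_trans a Hj0') b; by rewrite ltxx.
split => //.
have dpos k : 0 < d i 0 k by have := hdh _ hip k; have := hh _ hip k; lra.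
have snz k : Num.sqrt (d i 0 k) != 0 by rewrite gt_eqF // sqrtr_gt0.
exists (xbar *m diag_mx (dsqrt (d i))); split; last first.
  apply/matrixP => r k; rewrite ord1 !mdiagE dsqrtE dinvsqrtE mulrK // unitfE //.
split.
  by rewrite /Cs l0_scale // => k; rewrite dsqrtE.
move=> y' Cy'.
have E : forall (a w : 'rV[R]_n),
   dotv (w - (a *m diag_mx (dsqrt (d i)) - g a *m diag_mx (dinvsqrt (d i))))
        (w - (a *m diag_mx (dsqrt (d i)) - g a *m diag_mx (dinvsqrt (d i)))) =
   \sum_k (w 0 k - (a 0 k * Num.sqrt (d i 0 k) - g a 0 k * (Num.sqrt (d i 0 k))^-1)) *
          (w 0 k - (a 0 k * Num.sqrt (d i 0 k) - g a 0 k * (Num.sqrt (d i 0 k))^-1)).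
  by move=> a w; rewrite dotvE; apply: eq_bigr => k _; rewrite !entryB !mdiagE dsqrtE dinvsqrtE.
rewrite !E.
under eq_bigr do rewrite mdiagE dsqrtE.
apply: (@limit_ineq R n v xbar g (fun k => Num.sqrt (d i 0 k))
          (fun k => (Num.sqrt (d i 0 k))^-1) y' (fun j => (j %% p = i.-1)%N) hgc approx).
move=> j hj /=.
have [y [Py ey]] := vstep j.
rewrite hj prednK // in Py ey.
have := Py.2 y' Cy'; rewrite !E.
have ye : forall k, y 0 k = v j.+1 0 k * Num.sqrt (d i 0 k).
  by move=> k; rewrite ey mdiagE dinvsqrtE mulrVK // unitfE.
move=> H; apply: le_trans H; rewrite le_eqVlt; apply/orP; left; apply/eqP; apply: eq_bigr => k _; by rewrite ye.
Qed.
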